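(* Let $m\ge2$ be even and let $E_{\mathrm{hsc},m}$ be the $m\times 2$ matrix whose $j$-th row is $(\cos(j\pi/m),\sin(j\pi/m))$, $j=1,\dots,m$. Then for every integer $L\ge2$, $$\mathscr D_{\mathrm a}(E_{\mathrm{hsc},m},L)<\sqrt{2e}\,m\,L^{-m/2}.$$
   Context: For a $k\times m$ matrix $F$, finite $\mathscr A\subset\mathbb{R}$ and bounded $\mathscr X\subset\mathbb{R}^k$, $\mathscr D_{\mathrm s}(F,\mathscr A,\mathscr X):=\sup_{x\in\mathscr X}\inf_{q\in\mathscr A^m}\|x-Fq\|_2$; for an $m\times k$ matrix $E$, $\mathscr D_{\mathrm a}(E,\mathscr A,\mathscr X):=\inf\{\mathscr D_{\mathrm s}(F,\mathscr A,\mathscr X):FE=I_k\}$; and $\mathscr D_{\mathrm a}(E,L):=\inf_{|\mathscr A|=L}\mathscr D_{\mathrm a}(E,\mathscr A,B_1)$ with $B_1$ the closed unit Euclidean ball of $\mathbb{R}^k$ (here $k=2$). *)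

(* Defs.v *)
From Stdlib Require Import Reals Lra Lia List Classical ClassicalEpsilon.
Open Scope R_scope.

Definition is_glb (S : R -> Prop) (v : R) : Prop :=
  (forall x, S x -> v <= x) /\ (forall w, (forall x, S x -> w <= x) -> w <= v).

(* supremum / infimum of a set of reals; default value 0 when it does not
   exist as a real number (never happens in the situations used below). *)
Definition Rsup (S : R -> Prop) : R :=
  proj1_sig (constructive_indefinite_description
    (fun v => is_lub S v \/ (~ (exists w, is_lub S w) /\ v = 0))
    (match classic (exists w, is_lub S w) with
     | or_introl H => match H with ex_intro _ w Hw => ex_intro _ w (or_introl Hw) end
     | or_intror H => ex_intro _ 0 (or_intror (conj H eq_refl))
     end)).

Definition Rinf (S : R -> Prop) : R :=
  proj1_sig (constructive_indefinite_description
    (fun v => is_glb S v \/ (~ (exists w, is_glb S w) /\ v = 0))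
    (match classic (exists w, is_glb S w) with
     | or_introl H => match H with ex_intro _ w Hw => ex_intro _ w (or_introl Hw) end
     | or_intror H => ex_intro _ 0 (or_intror (conj H eq_refl))
     end)).

Fixpoint sumR (n : nat) (f : nat -> R) : R :=
  match n with
  | O => 0
  | S n' => sumR n' f + f n'
  end.

Definition dist2 (x y : R * R) : R :=
  sqrt ((fst x - fst y) ^ 2 + (snd x - snd y) ^ 2).

Definition B1 (x : R * R) : Prop := (fst x) ^ 2 + (snd x) ^ 2 <= 1.

(* A 2 x m matrix F is a function F i j (i < 2, j < m); an m x 2 matrix E is
   a function E j k (j < m, k < 2).  Vectors q in A^m are functions q j, j < m. *)
Definition mulFq (m : nat) (F : nat -> nat -> R) (q : nat -> R) : R * R :=
  (sumR m (fun j => F 0%nat j * q j), sumR m (fun j => F 1%nat j * q j)).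

Definition left_inverse (m : nat) (F E : nat -> nat -> R) : Prop :=
  forall i k, (i < 2)%nat -> (k < 2)%nat ->
    sumR m (fun j => F i j * E j k) = if Nat.eqb i k then 1 else 0.

Definition D_s (m : nat) (F : nat -> nat -> R) (A : list R) (X : R * R -> Prop) : R :=
  Rsup (fun d => exists x, X x /\
    d = Rinf (fun e => exists q : nat -> R,
             (forall j, (j < m)%nat -> In (q j) A) /\ e = dist2 x (mulFq m F q))).

Definition D_a (m : nat) (E : nat -> nat -> R) (A : list R) (X : R * R -> Prop) : R :=
  Rinf (fun d => exists F, left_inverse m F E /\ d = D_s m F A X).

Definition D_aL (m : nat) (E : nat -> nat -> R) (L : nat) : R :=
  Rinf (fun d => exists A : list R, NoDup A /\ length A = L /\ d = D_a m E A B1).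

(* E_hsc,m : row j (1-based, j = 1..m) is (cos(j pi/m), sin(j pi/m));
   here rows are 0-indexed: row j is (cos((j+1) pi/m), sin((j+1) pi/m)). *)
Definition E_hsc (m : nat) : nat -> nat -> R :=
  fun j k => if Nat.eqb k 0 then cos (INR (S j) * PI / INR m)
             else sin (INR (S j) * PI / INR m).

(* Main.v *)
Require Import Defs.
From Stdlib Require Import Reals Lra Lia List Classical ClassicalEpsilon.
Open Scope R_scope.

Lemma sumR_ext n f g : (forall j, (j < n)%nat -> f j = g j) -> sumR n f = sumR n g.
Proof.
  induction n; intros H; simpl; auto.
  rewrite IHn by (intros; apply H; lia). rewrite H by lia. reflexivity.
Qed.

Lemma sumR_split a b f : sumR (a + b) f = sumR a f + sumR b (fun j => f (a + j)%nat).
Proof.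
  induction b.
  - rewrite Nat.add_0_r. simpl. ring.
  - rewrite Nat.add_succ_r. simpl. rewrite IHb. ring.
Qed.

Lemma sumR_split2 m n f : m = (n + n)%nat -> sumR m f = sumR n f + sumR n (fun j => f (n + j)%nat).
Proof. intros ->. apply sumR_split. Qed.

Lemma sumR_lin n a b f g : sumR n (fun j => a * f j + b * g j) = a * sumR n f + b * sumR n g.
Proof. induction n; simpl; [ring| rewrite IHn; ring]. Qed.

Lemma sumR_scal n a f : sumR n (fun j => a * f j) = a * sumR n f.
Proof. induction n; simpl; [ring| rewrite IHn; ring]. Qed.

Lemma sumR_zero n : sumR n (fun _ => 0) = 0.
Proof. induction n; simpl; [ring| rewrite IHn; ring]. Qed.

Lemma sumR_nonneg n f : (forall j, (j < n)%nat -> 0 <= f j) -> 0 <= sumR n f.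
Proof. induction n; intros H; simpl; [lra|]. assert (0 <= sumR n f) by (apply IHn; intros; apply H; lia). assert (0 <= f n) by (apply H; lia). lra. Qed.

Lemma sumR_pos n f : (1 <= n)%nat -> (forall j, (j < n)%nat -> 0 < f j) -> 0 < sumR n f.
Proof. intros Hn H. destruct n as [|n]; [lia|]. simpl.
  assert (0 <= sumR n f) by (apply sumR_nonneg; intros; left; apply H; lia).
  assert (0 < f n) by (apply H; lia). lra. Qed.

Lemma geom n x : sumR n (fun j => x ^ j) * (x - 1) = x ^ n - 1.
Proof. induction n; simpl; [ring|]. rewrite Rmult_plus_distr_r, IHn. ring. Qed.

Lemma digits L n K : (1 <= L)%nat -> (K < L ^ n)%nat ->
  exists k : nat -> nat, (forall j, (j < n)%nat -> (k j < L)%nat) /\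
    INR K = sumR n (fun j => INR (k j) * INR L ^ j).
Proof.
  intros HL. revert K. induction n as [|n IH]; intros K HK.
  - exists (fun _ => 0%nat). split; [intros; lia|]. simpl in HK. replace K with 0%nat by lia. simpl. reflexivity.
  - set (P := (L ^ n)%nat).
    assert (HP : (P <> 0)%nat) by (apply Nat.pow_nonzero; lia).
    destruct (IH (K mod P)%nat) as [k' [Hk1 Hk2]].
    { apply Nat.mod_upper_bound; auto. }
    exists (fun j => if (j <? n)%nat then k' j else (K / P)%nat). split.
    + intros j Hj. destruct (Nat.ltb_spec j n). apply Hk1; lia.
      apply Nat.Div0.div_lt_upper_bound; auto. simpl in HK. fold P in HK. nia.
    + simpl. rewrite Nat.ltb_irrefl.
      rewrite (sumR_ext n _ (fun j => INR (k' j) * INR L ^ j)).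
      2:{ intros j Hj. destruct (Nat.ltb_spec j n); [reflexivity|lia]. }
      rewrite <- Hk2. rewrite (Nat.div_mod K P HP) at 1.
      rewrite plus_INR, mult_INR. unfold P. rewrite pow_INR. ring.
Qed.

Lemma coord_approx (L n : nat) (d t : R) : (2 <= L)%nat -> (1 <= n)%nat -> 0 < d ->
  Rabs t <= INR L ^ n * d / 4 ->
  exists k : nat -> nat, (forall j, (j < n)%nat -> (k j < L)%nat) /\
    Rabs (t - sumR n (fun j => INR L ^ j * (d * (INR (k j) - (INR L - 1) / 2)))) <= d / 2.
Proof.
  intros HL Hn Hd Ht.
  set (P := INR L ^ n).
  assert (HLn : (2 <= L ^ n)%nat).
  { apply Nat.le_trans with (L^1)%nat; [simpl; lia| apply Nat.pow_le_mono_r; lia]. }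
  assert (HP2 : 2 <= P).
  { unfold P. rewrite <- pow_INR. replace 2 with (INR 2) by (simpl; ring). apply le_INR; auto. }
  set (w := t / d).
  assert (Htw : t = w * d) by (unfold w; field; lra).
  assert (Htb : - (P * d / 4) <= t <= P * d / 4).
  { fold P in Ht. unfold Rabs in Ht. destruct (Rcase_abs t); lra. }
  assert (Hwb : - (P / 4) <= w <= P / 4).
  { split; apply Rmult_le_reg_r with d; auto; rewrite <- Htw; lra. }
  set (u := w + (P - 1) / 2).
  set (z := up (u - 1/2)).
  destruct (archimed (u - 1/2)) as [Hz1 Hz2]. fold z in Hz1, Hz2.
  assert (Hz0 : (0 <= z)%Z).
  { assert (-1 < z)%Z; [|lia]. apply lt_IZR. unfold u in Hz1. simpl. lra. }
  set (K := Z.to_nat z).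
  assert (HK : INR K = IZR z) by (unfold K; rewrite INR_IZR_INZ, Znat.Z2Nat.id; auto).
  assert (HKlt : (K < L ^ n)%nat).
  { apply INR_lt. rewrite HK, pow_INR. fold P. unfold u in Hz2. lra. }
  destruct (digits L n K) as [k [Hk1 Hk2]]; [lia|auto|].
  exists k. split; auto.
  assert (Hsum : sumR n (fun j => INR L ^ j * (d * (INR (k j) - (INR L - 1) / 2)))
     = d * INR K - d * (P - 1) / 2).
  { rewrite (sumR_ext n _ (fun j => d * (INR (k j) * INR L ^ j) + (- (d * (INR L - 1) / 2)) * INR L ^ j)).
    2:{ intros; cbv beta; unfold Rdiv; ring. }
    rewrite sumR_lin, <- Hk2.
    pose proof (geom n (INR L)) as G. fold P in G.
    assert (G' : sumR n (pow (INR L)) * (INR L - 1) = P - 1) by exact G.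
    rewrite <- G'. unfold Rdiv; ring. }
  rewrite Hsum, HK, Htw.
  replace (w * d - (d * IZR z - d * (P - 1) / 2)) with (d * (u - IZR z)) by (unfold u; unfold Rdiv; ring).
  rewrite Rabs_mult, Rabs_right by lra.
  assert (Rabs (u - IZR z) <= 1/2) by (unfold Rabs; destruct (Rcase_abs (u - IZR z)); lra).
  nra.
Qed.

Definition th (m j : nat) := INR (S j) * PI / INR m.
Definition al m n L := sumR n (fun j => INR L ^ j * cos (th m j)).
Definition be m n L := sumR n (fun j => INR L ^ j * sin (th m j)).
Definition g0 n L j := if (j <? n)%nat then INR L ^ j else 0.
Definition g1 n L j := if (j <? n)%nat then 0 else INR L ^ (j - n).
Definition Fm m n L i j :=
  if Nat.eqb i 0 then (al m n L * g0 n L j - be m n L * g1 n L j) / (al m n L ^ 2 + be m n L ^ 2)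
  else (be m n L * g0 n L j + al m n L * g1 n L j) / (al m n L ^ 2 + be m n L ^ 2).

Lemma Fm0 m n L j : Fm m n L 0 j = (al m n L * g0 n L j - be m n L * g1 n L j) / (al m n L ^ 2 + be m n L ^ 2).
Proof. reflexivity. Qed.
Lemma Fm1 m n L j : Fm m n L 1 j = (be m n L * g0 n L j + al m n L * g1 n L j) / (al m n L ^ 2 + be m n L ^ 2).
Proof. reflexivity. Qed.
Lemma E0 m j : E_hsc m j 0 = cos (th m j). Proof. reflexivity. Qed.
Lemma E1 m j : E_hsc m j 1 = sin (th m j). Proof. reflexivity. Qed.

Lemma g0_lo n L j : (j < n)%nat -> g0 n L j = INR L ^ j.
Proof. intros H. unfold g0. destruct (Nat.ltb_spec j n); [reflexivity|lia]. Qed.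
Lemma g0_hi n L j : g0 n L (n + j) = 0.
Proof. unfold g0. destruct (Nat.ltb_spec (n + j) n); [lia|reflexivity]. Qed.
Lemma g1_lo n L j : (j < n)%nat -> g1 n L j = 0.
Proof. intros H. unfold g1. destruct (Nat.ltb_spec j n); [reflexivity|lia]. Qed.
Lemma g1_hi n L j : g1 n L (n + j) = INR L ^ j.
Proof. unfold g1. destruct (Nat.ltb_spec (n + j) n); [lia|]. f_equal. lia. Qed.

Lemma th_shift m n j : m = (n + n)%nat -> (1 <= n)%nat -> th m (n + j) = th m j + PI / 2.
Proof.
  intros Hm Hn. unfold th. rewrite Hm. replace (S (n + j)) with (n + S j)%nat by lia.
  rewrite !plus_INR. assert (0 < INR n) by (apply lt_0_INR; lia). field. lra.
Qed.

Lemma th_range m n j : m = (n + n)%nat -> (j < n)%nat -> 0 < th m j <= PI / 2.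
Proof.
  intros Hm Hj. unfold th. rewrite Hm, plus_INR.
  assert (0 < INR n) by (apply lt_0_INR; lia).
  assert (INR (S j) <= INR n) by (apply le_INR; lia).
  assert (0 < INR (S j)) by (apply lt_0_INR; lia).
  pose proof PI_RGT_0.
  split.
  - apply Rdiv_lt_0_compat; [apply Rmult_lt_0_compat|]; lra.
  - assert (Heq : INR (S j) * PI / (INR n + INR n) = PI/2 - (INR n - INR (S j)) * PI / (2 * INR n)) by (field; lra).
    rewrite Heq.
    assert (0 <= (INR n - INR (S j)) * PI / (2 * INR n)).
    { unfold Rdiv. apply Rmult_le_pos; [apply Rmult_le_pos; lra| left; apply Rinv_0_lt_compat; lra]. }
    lra.
Qed.

Lemma cos_sh x : cos (x + PI / 2) = - sin x.
Proof. rewrite cos_plus, cos_PI2, sin_PI2. ring. Qed.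
Lemma sin_sh x : sin (x + PI / 2) = cos x.
Proof. rewrite sin_plus, cos_PI2, sin_PI2. ring. Qed.

Lemma sumR_opp n f : sumR n (fun j => - f j) = - sumR n f.
Proof. induction n; simpl; [ring| rewrite IHn; ring]. Qed.

Definition aval (d : R) (L k : nat) := d * (INR k - (INR L - 1) / 2).
Definition qf n L d (kx ky : nat -> nat) j := if (j <? n)%nat then aval d L (kx j) else aval d L (ky (j - n)%nat).
Lemma qf_lo n L d kx ky j : (j < n)%nat -> qf n L d kx ky j = aval d L (kx j).
Proof. intros H. unfold qf. destruct (Nat.ltb_spec j n); [reflexivity|lia]. Qed.
Lemma qf_hi n L d kx ky j : qf n L d kx ky (n + j) = aval d L (ky j).
Proof. unfold qf. destruct (Nat.ltb_spec (n + j) n); [lia|]. do 2 f_equal. lia. Qed.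

Section S.
Variables (m n L : nat).
Hypothesis (Hmn : m = (n + n)%nat) (Hn : (1 <= n)%nat) (HL : (2 <= L)%nat).

Lemma S00 : sumR m (fun j => g0 n L j * E_hsc m j 0) = al m n L.
Proof.
  rewrite (sumR_split2 m n _ Hmn).
  rewrite (sumR_ext n (fun j => g0 n L (n + j) * E_hsc m (n + j) 0) (fun _ => 0)).
  2:{ intros; cbv beta; rewrite g0_hi; ring. }
  rewrite sumR_zero, Rplus_0_r. apply sumR_ext. intros j Hj. rewrite g0_lo, E0 by auto. reflexivity.
Qed.
Lemma S01 : sumR m (fun j => g0 n L j * E_hsc m j 1) = be m n L.
Proof.
  rewrite (sumR_split2 m n _ Hmn).
  rewrite (sumR_ext n (fun j => g0 n L (n + j) * E_hsc m (n + j) 1) (fun _ => 0)).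
  2:{ intros; cbv beta; rewrite g0_hi; ring. }
  rewrite sumR_zero, Rplus_0_r. apply sumR_ext. intros j Hj. rewrite g0_lo, E1 by auto. reflexivity.
Qed.
Lemma S10 : sumR m (fun j => g1 n L j * E_hsc m j 0) = - be m n L.
Proof.
  rewrite (sumR_split2 m n _ Hmn).
  rewrite (sumR_ext n (fun j => g1 n L j * E_hsc m j 0) (fun _ => 0)).
  2:{ intros; cbv beta; rewrite g1_lo by auto; ring. }
  rewrite sumR_zero, Rplus_0_l. unfold be. rewrite <- sumR_opp. apply sumR_ext. intros j Hj.
  cbv beta. rewrite g1_hi, E0, th_shift, cos_sh by auto. ring.
Qed.
Lemma S11 : sumR m (fun j => g1 n L j * E_hsc m j 1) = al m n L.
Proof.
  rewrite (sumR_split2 m n _ Hmn).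
  rewrite (sumR_ext n (fun j => g1 n L j * E_hsc m j 1) (fun _ => 0)).
  2:{ intros; cbv beta; rewrite g1_lo by auto; ring. }
  rewrite sumR_zero, Rplus_0_l. apply sumR_ext. intros j Hj.
  cbv beta. rewrite g1_hi, E1, th_shift, sin_sh by auto. ring.
Qed.

Lemma be_pos : 0 < be m n L.
Proof.
  unfold be. apply sumR_pos; auto. intros j Hj.
  destruct (th_range m n j Hmn Hj).
  apply Rmult_lt_0_compat. apply pow_lt. apply lt_0_INR; lia. apply sin_gt_0; lra.
Qed.

Lemma r2_pos : 0 < al m n L ^ 2 + be m n L ^ 2.
Proof. pose proof be_pos. nra. Qed.

Ltac li_case c1 c2 k Sa Sb :=
  rewrite (sumR_ext m _ (fun j => c1 * (g0 n L j * E_hsc m j k) + c2 * (g1 n L j * E_hsc m j k)));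
  [ rewrite sumR_lin, Sa, Sb; pose proof r2_pos; field; lra
  | intros; cbv beta; first [rewrite Fm0 | rewrite Fm1]; unfold Rdiv; ring ].

Lemma Fm_li : left_inverse m (Fm m n L) (E_hsc m).
Proof.
  intros i k Hi Hk.
  destruct i as [|[|i]]; try lia; destruct k as [|[|k]]; try lia; cbn [Nat.eqb].
  - li_case (al m n L / (al m n L ^ 2 + be m n L ^ 2)) (- be m n L / (al m n L ^ 2 + be m n L ^ 2)) 0%nat S00 S10.
  - li_case (al m n L / (al m n L ^ 2 + be m n L ^ 2)) (- be m n L / (al m n L ^ 2 + be m n L ^ 2)) 1%nat S01 S11.
  - li_case (be m n L / (al m n L ^ 2 + be m n L ^ 2)) (al m n L / (al m n L ^ 2 + be m n L ^ 2)) 0%nat S00 S10.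
  - li_case (be m n L / (al m n L ^ 2 + be m n L ^ 2)) (al m n L / (al m n L ^ 2 + be m n L ^ 2)) 1%nat S01 S11.
Qed.

Definition dd := 4 * sqrt (al m n L ^ 2 + be m n L ^ 2) / INR L ^ n.
Definition A0 := map (aval dd L) (seq 0 L).

Lemma approx (x : (R * R)%type) : Defs.B1 x -> exists q, (forall j, (j < m)%nat -> In (q j) A0) /\ dist2 x (mulFq m (Fm m n L) q) <= 3 / INR L ^ n.
Proof.
  destruct x as [x1 x2]. unfold Defs.B1; cbn [fst snd]. intro Hx.
  pose proof r2_pos as Hr2. pose proof be_pos as Hb.
  set (a := al m n L) in *. set (b := be m n L) in *.
  set (r := sqrt (a ^ 2 + b ^ 2)).
  assert (Hr : r * r = a ^ 2 + b ^ 2) by (apply sqrt_sqrt; lra).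
  assert (Hr0 : 0 < r) by (apply sqrt_lt_R0; lra).
  set (P := INR L ^ n).
  assert (HP : 0 < P) by (apply pow_lt; apply lt_0_INR; lia).
  set (d := dd).
  assert (Hd : d = 4 * r / P) by reflexivity.
  assert (Hd0 : 0 < d) by (rewrite Hd; unfold Rdiv; apply Rmult_lt_0_compat; [lra| apply Rinv_0_lt_compat; lra]).
  set (t1 := a * x1 + b * x2). set (t2 := - b * x1 + a * x2).
  assert (Hbd : forall t, t ^ 2 <= r * r -> Rabs t <= P * d / 4).
  { intros t Ht. replace (P * d / 4) with r by (rewrite Hd; field; lra).
    pose proof (pow2_abs t). pose proof (Rabs_pos t). nra. }
  destruct (coord_approx L n d t1 HL Hn Hd0) as [kx [Hkx1 Hkx2]].
  { apply Hbd. rewrite Hr. unfold t1.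
    assert (Hcs : (a * x1 + b * x2) ^ 2 + (a * x2 - b * x1) ^ 2 = (a ^ 2 + b ^ 2) * (x1 ^ 2 + x2 ^ 2)) by ring.
    assert (0 <= (a * x2 - b * x1) ^ 2) by (apply pow2_ge_0).
    assert ((a ^ 2 + b ^ 2) * (x1 ^ 2 + x2 ^ 2) <= (a ^ 2 + b ^ 2) * 1) by (apply Rmult_le_compat_l; lra).
    lra. }
  destruct (coord_approx L n d t2 HL Hn Hd0) as [ky [Hky1 Hky2]].
  { apply Hbd. rewrite Hr. unfold t2.
    assert (Hcs : (- b * x1 + a * x2) ^ 2 + (a * x1 + b * x2) ^ 2 = (a ^ 2 + b ^ 2) * (x1 ^ 2 + x2 ^ 2)) by ring.
    assert (0 <= (a * x1 + b * x2) ^ 2) by (apply pow2_ge_0).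
    assert ((a ^ 2 + b ^ 2) * (x1 ^ 2 + x2 ^ 2) <= (a ^ 2 + b ^ 2) * 1) by (apply Rmult_le_compat_l; lra).
    lra. }
  exists (qf n L d kx ky). split.
  { intros j Hj. unfold A0. destruct (Nat.ltb_spec j n).
    - rewrite qf_lo by auto. apply in_map. apply in_seq. specialize (Hkx1 j H). lia.
    - replace j with (n + (j - n))%nat by lia. rewrite qf_hi. apply in_map. apply in_seq.
      specialize (Hky1 (j - n)%nat). lia. }
  set (Y1 := sumR n (fun j => INR L ^ j * (d * (INR (kx j) - (INR L - 1) / 2)))) in *.
  set (Y2 := sumR n (fun j => INR L ^ j * (d * (INR (ky j) - (INR L - 1) / 2)))) in *.
  assert (Hf0 : sumR m (fun j => Fm m n L 0 j * qf n L d kx ky j) = (a * Y1 - b * Y2) / (a ^ 2 + b ^ 2)).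
  { rewrite (sumR_split2 m n _ Hmn).
    rewrite (sumR_ext n _ (fun j => (a / (a ^ 2 + b ^ 2)) * (INR L ^ j * (d * (INR (kx j) - (INR L - 1) / 2))))).
    2:{ intros j Hj; cbv beta. rewrite Fm0, g0_lo, g1_lo, qf_lo by auto. unfold aval. fold a b. unfold Rdiv; ring. }
    rewrite (sumR_ext n (fun j => Fm m n L 0 (n + j) * qf n L d kx ky (n + j)) (fun j => (- b / (a ^ 2 + b ^ 2)) * (INR L ^ j * (d * (INR (ky j) - (INR L - 1) / 2))))).
    2:{ intros j Hj; cbv beta. rewrite Fm0, g0_hi, g1_hi, qf_hi by auto. unfold aval. fold a b. unfold Rdiv; ring. }
    rewrite !sumR_scal. fold Y1 Y2. field. lra. }
  assert (Hf1 : sumR m (fun j => Fm m n L 1 j * qf n L d kx ky j) = (b * Y1 + a * Y2) / (a ^ 2 + b ^ 2)).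
  { rewrite (sumR_split2 m n _ Hmn).
    rewrite (sumR_ext n _ (fun j => (b / (a ^ 2 + b ^ 2)) * (INR L ^ j * (d * (INR (kx j) - (INR L - 1) / 2))))).
    2:{ intros j Hj; cbv beta. rewrite Fm1, g0_lo, g1_lo, qf_lo by auto. unfold aval. fold a b. unfold Rdiv; ring. }
    rewrite (sumR_ext n (fun j => Fm m n L 1 (n + j) * qf n L d kx ky (n + j)) (fun j => (a / (a ^ 2 + b ^ 2)) * (INR L ^ j * (d * (INR (ky j) - (INR L - 1) / 2))))).
    2:{ intros j Hj; cbv beta. rewrite Fm1, g0_hi, g1_hi, qf_hi by auto. unfold aval. fold a b. unfold Rdiv; ring. }
    rewrite !sumR_scal. fold Y1 Y2. field. lra. }
  unfold dist2, mulFq. cbn [fst snd]. rewrite Hf0, Hf1.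
  set (e1 := t1 - Y1) in *. set (e2 := t2 - Y2) in *.
  assert (Hid : (x1 - (a * Y1 - b * Y2) / (a ^ 2 + b ^ 2)) ^ 2 + (x2 - (b * Y1 + a * Y2) / (a ^ 2 + b ^ 2)) ^ 2
     = (e1 ^ 2 + e2 ^ 2) / (a ^ 2 + b ^ 2)).
  { unfold e1, e2, t1, t2. field. lra. }
  rewrite Hid.
  assert (He1 : e1 ^ 2 <= (d / 2) ^ 2).
  { rewrite <- pow2_abs. apply pow_incr. split; [apply Rabs_pos| exact Hkx2]. }
  assert (He2 : e2 ^ 2 <= (d / 2) ^ 2).
  { rewrite <- pow2_abs. apply pow_incr. split; [apply Rabs_pos| exact Hky2]. }
  assert (Hdd : (d / 2) ^ 2 = 4 * (r * r) / P ^ 2) by (rewrite Hd; field; lra).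
  rewrite <- (sqrt_pow2 (3 / P)) by (unfold Rdiv; left; apply Rmult_lt_0_compat; [lra| apply Rinv_0_lt_compat; lra]).
  apply sqrt_le_1_alt.
  apply Rle_trans with (8 * (r * r) / P ^ 2 / (a ^ 2 + b ^ 2)).
  { unfold Rdiv. apply Rmult_le_compat_r; [left; apply Rinv_0_lt_compat; lra|].
    assert (8 * (r * r) * / P ^ 2 = 2 * (4 * (r * r) / P ^ 2)) by (unfold Rdiv; ring). lra. }
  rewrite Hr. replace (8 * (a ^ 2 + b ^ 2) / P ^ 2 / (a ^ 2 + b ^ 2)) with (8 / P ^ 2) by (field; lra).
  replace ((3 / P) ^ 2) with (9 / P ^ 2) by (field; lra).
  unfold Rdiv. apply Rmult_le_compat_r; [left; apply Rinv_0_lt_compat; apply pow_lt; lra| lra].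
Qed.

End S.

Lemma Rinf_le_max (S : R -> Prop) x : S x -> Rinf S <= Rmax 0 x.
Proof.
  intro Hx. unfold Rinf.
  match goal with |- context [proj1_sig ?t] => destruct t as [v [[H1 H2]|[Hnn Hv]]] end; simpl; [|rewrite Hv].
  - apply Rle_trans with x; [auto|apply Rmax_r].
  - apply Rmax_l.
Qed.

Lemma Rsup_le_max (S : R -> Prop) B : (forall y, S y -> y <= B) -> Rsup S <= Rmax 0 B.
Proof.
  intro HB. unfold Rsup.
  match goal with |- context [proj1_sig ?t] => destruct t as [v [[H1 H2]|[Hnn Hv]]] end; simpl; [|rewrite Hv].
  - apply Rle_trans with B; [apply H2; exact HB|apply Rmax_r].
  - apply Rmax_l.
Qed.

Theorem mainTheorem3 (m : nat) (Hm : (2 <= m)%nat) (Heven : Nat.Even m)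
  (L : nat) (HL : (2 <= L)%nat) :
  D_aL m (E_hsc m) L < sqrt (2 * exp 1) * INR m * Rpower (INR L) (- (INR m / 2)).
Proof.
  destruct Heven as [n Hmn2].
  assert (Hmn : m = (n + n)%nat) by lia.
  assert (Hn : (1 <= n)%nat) by lia.
  set (P := INR L ^ n).
  assert (HP : 0 < P) by (apply pow_lt; apply lt_0_INR; lia).
  assert (HB : 0 < 3 / P) by (unfold Rdiv; apply Rmult_lt_0_compat; [lra|apply Rinv_0_lt_compat; lra]).
  assert (Hle : D_aL m (E_hsc m) L <= 3 / P).
  { apply Rle_trans with (Rmax 0 (D_a m (E_hsc m) (A0 m n L) Defs.B1)).
    { apply Rinf_le_max. exists (A0 m n L). split; [|split; [|reflexivity]].
      - unfold A0. apply NoDup_map_NoDup_ForallPairs; [|apply seq_NoDup].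
        intros u v _ _ Huv. unfold aval in Huv.
        assert (Hd : 0 < dd m n L).
        { unfold dd. pose proof (r2_pos m n L Hmn Hn HL).
          unfold Rdiv. apply Rmult_lt_0_compat; [apply Rmult_lt_0_compat; [lra| apply sqrt_lt_R0; lra]| apply Rinv_0_lt_compat; apply pow_lt; apply lt_0_INR; lia]. }
        apply INR_eq. apply Rmult_eq_reg_l in Huv; lra.
      - unfold A0. rewrite length_map, length_seq. reflexivity. }
    apply Rmax_lub; [lra|].
    apply Rle_trans with (Rmax 0 (D_s m (Fm m n L) (A0 m n L) Defs.B1)).
    { apply Rinf_le_max. exists (Fm m n L). split; [apply Fm_li; auto|reflexivity]. }
    apply Rmax_lub; [lra|].
    apply Rle_trans with (Rmax 0 (3 / P)); [|apply Rmax_lub; lra].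
    apply Rsup_le_max. intros y [x [Hx ->]].
    destruct (approx m n L Hmn Hn HL x Hx) as [q [Hq Hd]].
    apply Rle_trans with (Rmax 0 (dist2 x (mulFq m (Fm m n L) q))).
    { apply Rinf_le_max. exists q. split; auto. }
    apply Rmax_lub; [lra|exact Hd]. }
  eapply Rle_lt_trans; [exact Hle|].
  assert (Hpow : Rpower (INR L) (- (INR m / 2)) = / P).
  { replace (INR m / 2) with (INR n) by (rewrite Hmn, plus_INR; field).
    rewrite Rpower_Ropp, Rpower_pow; [reflexivity| apply lt_0_INR; lia]. }
  rewrite Hpow.
  assert (He : 2 < exp 1) by (pose proof (exp_ineq1 1); lra).
  assert (Hs : 2 <= sqrt (2 * exp 1)).
  { assert (Hq : sqrt (2 * 2) <= sqrt (2 * exp 1)) by (apply sqrt_le_1_alt; lra). rewrite sqrt_square in Hq; lra. }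
  assert (Hm2 : 2 <= INR m) by (replace 2 with (INR 2) by (simpl; ring); apply le_INR; lia).
  unfold Rdiv. apply Rmult_lt_compat_r; [apply Rinv_0_lt_compat; lra|].
  nra.
Qed.
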